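(* There is an absolute constant $C$ such that for every odd prime $p$ and every integer $n\ge2$, if $X$ is uniform on $\{0,1\}^{n-1}$, then $$\mathbb{E}_X\big[q_p(|X|)\big]\le\tfrac12-\tfrac1\pi+\tfrac1{2p}+Cp^{3/2}e^{-n/p^2},$$ where for an integer $k$, $q_p(k)=\sin^2\!\big(-\tfrac\pi4+\tfrac{\pi}{p}k\big)$ if $(k\bmod p)<p/2$ and $q_p(k)=\cos^2\!\big(-\tfrac\pi4+\tfrac{\pi}{p}k\big)$ otherwise.
   Context: $|X|$ is the Hamming weight of $X$ and $k\bmod p\in\{0,\dots,p-1\}$. (Equivalently, $q_p(|x|)$ is the probability that a bit $Y_x$ with $\Pr[Y_x=\mathrm{parity}(x)]=\cos^2(-\pi/4+\pi|x|/p)$ differs from $\mathrm{majmod}_p(x)\oplus\mathrm{parity}(x)$.) *)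

(* Defs.v *)
From Stdlib Require Import Reals Lra Lia List.
Open Scope R_scope.

Fixpoint cube (m : nat) : list (list bool) :=
  match m with
  | O => nil :: nil
  | S m' => map (cons false) (cube m') ++ map (cons true) (cube m')
  end.

Definition hweight (x : list bool) : nat := count_occ Bool.bool_dec x true.

(* q_p(k) for an integer k; k mod p taken in {0,...,p-1} (Z.modulo, p > 0). *)
Definition q (p : nat) (k : Z) : R :=
  let theta := - PI / 4 + PI / INR p * IZR k in
  if Rlt_dec (IZR (Z.modulo k (Z.of_nat p))) (INR p / 2)
  then (sin theta) ^ 2 else (cos theta) ^ 2.

Definition unif_exp (m : nat) (f : list bool -> R) : R :=
  fold_right Rplus 0 (map f (cube m)) / 2 ^ m.

(* Main.v *)
Require Import Defs.
From Stdlib Require Import Reals Lra Lia ZArith Znumtheory List.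
Open Scope R_scope.

Fixpoint sumR (n:nat) (f:nat->R) : R :=
  match n with O => 0 | S n' => sumR n' f + f n' end.

Lemma sumR_ext n f g : (forall i, (i < n)%nat -> f i = g i) -> sumR n f = sumR n g.
Proof. induction n; simpl; intros H; auto. rewrite IHn by (intros; apply H; lia). rewrite (H n) by lia; auto. Qed.

Lemma sumR_plus n f g : sumR n (fun i => f i + g i) = sumR n f + sumR n g.
Proof. induction n; simpl; [lra|rewrite IHn; lra]. Qed.

Lemma sumR_scal n c f : sumR n (fun i => c * f i) = c * sumR n f.
Proof. induction n; simpl; [lra|rewrite IHn; lra]. Qed.

Lemma sumR_const n c : sumR n (fun _ => c) = INR n * c.
Proof. induction n; simpl sumR; [simpl; lra|rewrite IHn, S_INR; lra]. Qed.

Lemma sumR_le n f g : (forall i, (i < n)%nat -> f i <= g i) -> sumR n f <= sumR n g.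
Proof. induction n; simpl; intros H; [lra|]. assert (f n <= g n) by (apply H; lia).
  assert (sumR n f <= sumR n g) by (apply IHn; intros; apply H; lia). lra. Qed.

Lemma sumR_nonneg n f : (forall i, (i < n)%nat -> 0 <= f i) -> 0 <= sumR n f.
Proof. intros H. replace 0 with (sumR n (fun _ => 0)). apply sumR_le; auto.
  rewrite sumR_const; lra. Qed.

Lemma sumR_first n f : sumR (S n) f = f 0%nat + sumR n (fun i => f (S i)).
Proof. induction n; simpl in *; [lra|]. rewrite IHn. lra. Qed.

Lemma sumR_split a b f : sumR (a + b) f = sumR a f + sumR b (fun k => f (a + k)%nat).
Proof. induction b; simpl. rewrite Nat.add_0_r; lra. rewrite Nat.add_succ_r; simpl. rewrite IHb. lra. Qed.

Lemma sumR_swap n m (f : nat -> nat -> R) :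
  sumR n (fun i => sumR m (fun j => f i j)) = sumR m (fun j => sumR n (fun i => f i j)).
Proof. induction n; simpl. rewrite sumR_const; simpl; lra.
  rewrite IHn, <- sumR_plus. reflexivity. Qed.

Lemma sumR_term0 n f : (0 < n)%nat -> (forall i, (i < n)%nat -> 0 <= f i) -> f 0%nat <= sumR n f.
Proof. destruct n; [lia|]. intros _ H. rewrite sumR_first.
  assert (0 <= sumR n (fun i => f (S i))) by (apply sumR_nonneg; intros; apply H; lia). lra. Qed.

Definition periodic (p:nat) (f:nat->R) := forall k, f (k + p)%nat = f k.

Lemma sumR_periodic p f a : periodic p f -> sumR p (fun j => f (j + a)%nat) = sumR p f.
Proof. intros H. induction a.
  - apply sumR_ext; intros; rewrite Nat.add_0_r; auto.
  - rewrite <- IHa. destruct p. reflexivity.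
    rewrite (sumR_first p (fun j => f (j + a)%nat)). simpl sumR.
    replace (f (0+a)%nat) with (f (p + S a)%nat) by (rewrite <- (H (0+a)%nat); f_equal; lia).
    replace (sumR p (fun i => f (S (i+a)))) with (sumR p (fun j => f (j + S a)%nat)) by (apply sumR_ext; intros; f_equal; lia). lra.
Qed.

Lemma CS s a : (sumR s a)^2 <= INR s * sumR s (fun i => (a i)^2).
Proof. induction s; simpl sumR. simpl; lra. rewrite S_INR.
  set (x := sumR s a) in *. set (Y := sumR s (fun i => a i ^ 2)) in *.
  assert (0 <= Y) by (apply sumR_nonneg; intros; apply pow2_ge_0).
  assert (0 <= INR s) by apply pos_INR.
  assert (2 * x * a s <= Y + INR s * (a s)^2).
  { destruct (Nat.eq_dec s 0) as [E|E].
    - subst s. unfold x, Y; simpl. lra.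
    - assert (0 < INR s) by (apply lt_0_INR; lia).
      assert (0 <= (x - INR s * a s)^2) by apply pow2_ge_0.
      assert (INR s * (2 * x * a s) <= INR s * (Y + INR s * (a s)^2)) by nra.
      apply Rmult_le_reg_l with (INR s); lra. }
  replace (sumR s (fun i => a i * (a i * 1))) with Y by (unfold Y; apply sumR_ext; intros; simpl; ring). nra. Qed.

Lemma telesc h c s : sumR s (fun i => h (c + i + 1)%nat - h (c + i)%nat) = h (c + s)%nat - h c.
Proof. induction s; simpl. rewrite Nat.add_0_r; lra. rewrite IHs.
  replace (c + s + 1)%nat with (c + S s)%nat by lia. lra. Qed.

Section Poinc.
Variable p : nat.
Variable h : nat -> R.
Hypothesis Hp : (0 < p)%nat.
Hypothesis Hper : periodic p h.
Hypothesis Hmean : sumR p h = 0.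

Definition dd k := h (S k) - h k.
Definition DD := sumR p (fun k => (dd k)^2).
Definition EE := sumR p (fun k => (h k)^2).

Lemma per_dd : periodic p (fun k => (dd k)^2).
Proof. intro k. unfold dd. replace (S (k + p)) with (S k + p)%nat by lia. rewrite !Hper. auto. Qed.

Lemma gen_bound a s : sumR p (fun j => (h (j + a)%nat - h (j + a + s)%nat)^2) <= (INR s)^2 * DD.
Proof.
  apply Rle_trans with (sumR p (fun j => INR s * sumR s (fun i => (dd (j + a + i))^2))).
  - apply sumR_le; intros j _.
    replace ((h (j + a)%nat - h (j + a + s)%nat)^2) with ((sumR s (fun i => dd (j + a + i)%nat))^2).
    apply CS.
    rewrite (sumR_ext s _ (fun i => h (j+a+i+1)%nat - h (j+a+i)%nat)) by (intros; unfold dd; f_equal; f_equal; lia).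
    rewrite telesc. ring.
  - rewrite sumR_scal, sumR_swap.
    rewrite (sumR_ext s _ (fun _ => DD)). rewrite sumR_const. lra.
    intros i _. unfold DD.
    rewrite <- (sumR_periodic p _ (a + i) per_dd). apply sumR_ext; intros; f_equal; f_equal; lia.
Qed.

Definition St t := sumR p (fun j => (h j - h (j + t)%nat)^2).

Lemma St_fwd t : St t <= (INR t)^2 * DD.
Proof. eapply Rle_trans; [|apply (gen_bound 0 t)]. right. apply sumR_ext; intros.
  rewrite !Nat.add_0_r. auto. Qed.

Lemma St_bwd t : (t <= p)%nat -> St t <= (INR (p - t))^2 * DD.
Proof. intros Ht. eapply Rle_trans; [|apply (gen_bound t (p - t))]. right. apply sumR_ext; intros j _.
  replace (j + t + (p - t))%nat with (j + p)%nat by lia. rewrite Hper. nra. Qed.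

Lemma DD_nonneg : 0 <= DD.
Proof. apply sumR_nonneg; intros; nra. Qed.

Lemma St_mid t : (t <= p)%nat -> St t <= INR t * (INR p - INR t) * DD.
Proof. intros Ht. pose proof (St_fwd t). pose proof (St_bwd t Ht). rewrite minus_INR in * by lia.
  pose proof DD_nonneg. pose proof (pos_INR t). assert (INR t <= INR p) by (apply le_INR; lia).
  destruct (Rle_dec (INR t) (INR p - INR t)).
  - assert (0 <= INR t * (INR p - INR t - INR t) * DD) by (apply Rmult_le_pos; [apply Rmult_le_pos|]; lra). nra.
  - assert (0 <= (INR p - INR t) * (INR t - (INR p - INR t)) * DD) by (apply Rmult_le_pos; [apply Rmult_le_pos|]; lra). nra.
Qed.

Lemma St_sum : sumR p St = 2 * INR p * EE.
Proof.
  unfold St. rewrite sumR_swap.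
  rewrite (sumR_ext p _ (fun j => INR p * (h j)^2 + (- 2 * h j) * sumR p (fun t => h (t + j)%nat) + sumR p (fun t => (h (t + j)%nat)^2))).
  rewrite !sumR_plus. rewrite (sumR_ext p (fun j => -2 * h j * sumR p (fun t => h (t + j)%nat)) (fun _ => 0)).
  rewrite (sumR_ext p (fun j => sumR p (fun t => (h (t + j)%nat)^2)) (fun _ => EE)).
  rewrite !sumR_const, sumR_scal. unfold EE. lra.
  intros; unfold EE; apply (sumR_periodic p (fun k => h k ^2)). intro k; rewrite Hper; auto.
  intros; rewrite sumR_periodic; auto. rewrite Hmean; lra.
  intros j _.
  transitivity (sumR p (fun t => h j ^2 + (-2 * h j) * h (t + j)%nat + h (t + j)%nat ^2)).
  apply sumR_ext; intros i _; rewrite (Nat.add_comm i); ring.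
  rewrite !sumR_plus, sumR_const, sumR_scal. ring.
Qed.

Lemma sum_id n : sumR n INR = INR n * (INR n - 1) / 2.
Proof. induction n. simpl; lra. change (sumR (S n) INR) with (sumR n INR + INR n). rewrite IHn, S_INR. field. Qed.
Lemma sum_sq n : sumR n (fun t => INR t ^2) = (INR n - 1) * INR n * (2 * INR n - 1) / 6.
Proof. induction n. simpl; lra. change (sumR (S n) (fun t => INR t ^2)) with (sumR n (fun t => INR t ^2) + INR n ^2). rewrite IHn, S_INR. field. Qed.

Lemma poincare : 12 * EE <= (INR p)^2 * DD.
Proof.
  pose proof St_sum.
  assert (sumR p St <= sumR p (fun t => INR t * (INR p - INR t) * DD)) by
    (apply sumR_le; intros; apply St_mid; lia).
  rewrite (sumR_ext p (fun t => INR t * (INR p - INR t) * DD) (fun t => (INR p * DD) * INR t + (- DD) * (INR t ^ 2))) in H0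
    by (intros; ring).
  rewrite sumR_plus, !sumR_scal, sum_id, sum_sq in H0.
  pose proof DD_nonneg. assert (1 <= INR p) by (apply (le_INR 1); lia).
  assert (0 <= EE) by (apply sumR_nonneg; intros; nra).
  nra.
Qed.
End Poinc.

Definition Top (g:nat->R) : nat->R := fun k => (g k + g (S k))/2.
Fixpoint Titer (m:nat) (g:nat->R) : nat -> R := match m with O => g | S m' => Titer m' (Top g) end.

Lemma Titer_ext m : forall g g', (forall i, g i = g' i) -> forall k, Titer m g k = Titer m g' k.
Proof. induction m; simpl; intros g g' H k; auto. apply IHm. intros; unfold Top; rewrite !H; auto. Qed.

Lemma Titer_lin m : forall a b g1 g2 k,
  Titer m (fun i => a * g1 i + b * g2 i) k = a * Titer m g1 k + b * Titer m g2 k.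
Proof. induction m; simpl; intros; auto. rewrite <- IHm. apply Titer_ext. intros; unfold Top; lra. Qed.

Lemma Titer_const m : forall c k, Titer m (fun _ => c) k = c.
Proof. induction m; simpl; intros; auto. transitivity (Titer m (fun _ => c) k); [apply Titer_ext; intros; unfold Top; lra| apply IHm]. Qed.

Section Energy.
Variable p : nat.
Hypothesis Hp2 : (2 <= p)%nat.
Let Hp : (0 < p)%nat. Proof. lia. Qed.

Lemma Top_per h : periodic p h -> periodic p (Top h).
Proof. intros H k; unfold Top. replace (S (k + p)) with (S k + p)%nat by lia. rewrite !H; auto. Qed.

Lemma Top_mean h : periodic p h -> sumR p h = 0 -> sumR p (Top h) = 0.
Proof. intros H1 H2. unfold Top.
  rewrite (sumR_ext p _ (fun k => /2 * h k + /2 * h (k + 1)%nat)) by (intros; rewrite Nat.add_1_r; lra).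
  rewrite sumR_plus, !sumR_scal, sumR_periodic by auto. lra. Qed.

Lemma Top_energy h : periodic p h -> sumR p h = 0 ->
  EE p (Top h) <= (1 - 3 / (INR p)^2) * EE p h.
Proof. intros H1 H2. pose proof (poincare p h Hp H1 H2).
  assert (EE p (Top h) = EE p h - DD p h / 4).
  { unfold EE, DD, Top, dd.
    rewrite (sumR_ext p _ (fun k => /2 * (h k)^2 + /2 * (h (k + 1)%nat)^2 + (-/4) * (h (S k) - h k)^2))
      by (intros; rewrite Nat.add_1_r; field).
    rewrite !sumR_plus, !sumR_scal.
    rewrite (sumR_periodic p (fun k => h k ^2)). lra. intro k; rewrite H1; auto. }
  rewrite H0. assert (0 < INR p) by (apply lt_0_INR; lia).
  assert (3 / INR p ^2 * EE p h <= DD p h / 4).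
  { apply Rmult_le_reg_l with (4 * INR p ^2). nra. field_simplify; try lra; nra. }
  lra. Qed.

Lemma EE_nonneg g : 0 <= EE p g.
Proof. apply sumR_nonneg; intros; apply pow2_ge_0. Qed.

Lemma Titer_energy m : forall h, periodic p h -> sumR p h = 0 ->
  EE p (Titer m h) <= (1 - 3 / (INR p)^2)^m * EE p h.
Proof. induction m; simpl; intros h H1 H2. lra.
  eapply Rle_trans. apply IHm. apply Top_per; auto. apply Top_mean; auto.
  assert (0 <= (1 - 3 / (INR p)^2)^m).
  { apply pow_le. assert (2 <= INR p) by (apply (le_INR 2); lia).
    assert (3 / INR p ^2 <= 1). { apply Rmult_le_reg_l with (INR p ^2). nra. field_simplify; nra. } lra. }
  pose proof (Top_energy h H1 H2).
  apply Rle_trans with ((1 - 3 / (INR p)^2)^m * ((1 - 3 / (INR p)^2) * EE p h));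
    [apply Rmult_le_compat_l; auto | idtac]. simpl; right; ring.
Qed.
End Energy.

Definition Lsum (l : list R) := fold_right Rplus 0 l.
Lemma Lsum_app l1 l2 : Lsum (l1 ++ l2) = Lsum l1 + Lsum l2.
Proof. induction l1; simpl; [lra|]. unfold Lsum in *; simpl. rewrite IHl1; lra. Qed.

Lemma hweight_cons b x : hweight (b :: x) = ((if b then 1 else 0) + hweight x)%nat.
Proof. unfold hweight. destruct b; simpl; auto. Qed.

Definition sumL m (G : nat -> R) := Lsum (map (fun x => G (hweight x)) (cube m)).

Lemma sumL_S m G : sumL (S m) G = sumL m G + sumL m (fun k => G (S k)).
Proof. unfold sumL. simpl. rewrite map_app, Lsum_app, !map_map. f_equal. Qed.

Lemma sumL_Titer m : forall G, sumL m G = 2 ^ m * Titer m G 0%nat.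
Proof. induction m; intros G.
  - unfold sumL, Lsum; simpl. unfold hweight; simpl. lra.
  - rewrite sumL_S, !IHm. simpl Titer.
    rewrite (Titer_ext m (Top G) (fun i => /2 * G i + /2 * G (S i))) by (intros; unfold Top; lra).
    rewrite Titer_lin. simpl. lra. Qed.

Lemma unif_Titer m G : unif_exp m (fun x => G (hweight x)) = Titer m G 0%nat.
Proof. unfold unif_exp. fold (Lsum (map (fun x => G (hweight x)) (cube m))).
  fold (sumL m G). rewrite sumL_Titer. field. apply pow_nonzero. lra. Qed.

Definition G p (k : nat) := q p (Z.of_nat k).

Lemma G_bounds p k : 0 <= G p k <= 1.
Proof. unfold G, q. destruct Rlt_dec.
  - pose proof (SIN_bound (- PI / 4 + PI / INR p * IZR (Z.of_nat k))). nra.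
  - pose proof (COS_bound (- PI / 4 + PI / INR p * IZR (Z.of_nat k))). nra. Qed.

Lemma G_per p : (0 < p)%nat -> periodic p (G p).
Proof. intros Hp k. unfold G, q.
  assert (0 < INR p) by (apply lt_0_INR; lia).
  replace (Z.of_nat (k + p) mod Z.of_nat p)%Z with (Z.of_nat k mod Z.of_nat p)%Z.
  replace (- PI / 4 + PI / INR p * IZR (Z.of_nat (k + p))) with
    ((- PI / 4 + PI / INR p * IZR (Z.of_nat k)) + PI).
  rewrite neg_sin, neg_cos. destruct Rlt_dec; ring.
  rewrite <- !INR_IZR_INZ, plus_INR. field. lra.
  rewrite Nat2Z.inj_add. replace (Z.of_nat k + Z.of_nat p)%Z with (Z.of_nat k + 1 * Z.of_nat p)%Z by ring.
  rewrite Z_mod_plus_full; auto. Qed.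

Lemma sin2_form y : sin (- PI / 4 + y) ^ 2 = (1 - sin (2 * y)) / 2.
Proof. assert (cos (2 * (- PI / 4 + y)) = sin (2 * y)).
  { replace (2 * (- PI / 4 + y)) with (2 * y - PI / 2) by field.
    rewrite cos_minus, cos_PI2, sin_PI2. ring. }
  rewrite cos_2a_sin in H. nra. Qed.

Lemma cos2_form y : cos (- PI / 4 + y) ^ 2 = (1 + sin (2 * y)) / 2.
Proof. assert (cos (2 * (- PI / 4 + y)) = sin (2 * y)).
  { replace (2 * (- PI / 4 + y)) with (2 * y - PI / 2) by field.
    rewrite cos_minus, cos_PI2, sin_PI2. ring. }
  rewrite cos_2a_cos in H. nra. Qed.

Lemma tele_sin x A n : 2 * sin x * sumR n (fun k => sin (2 * (A + INR k) * x)) =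
  cos ((2 * A - 1) * x) - cos ((2 * (A + INR n) - 1) * x).
Proof. induction n.
  - simpl. replace (A + 0) with A by ring. ring.
  - change (sumR (S n) (fun k => sin (2 * (A + INR k) * x))) with
      (sumR n (fun k => sin (2 * (A + INR k) * x)) + sin (2 * (A + INR n) * x)).
    rewrite Rmult_plus_distr_l, IHn, S_INR.
    replace ((2 * (A + INR n) - 1) * x) with (2 * (A + INR n) * x - x) by ring.
    replace ((2 * (A + (INR n + 1)) - 1) * x) with (2 * (A + INR n) * x + x) by ring.
    rewrite cos_minus, cos_plus. ring. Qed.

Section Mean.
Variable M : nat.
Hypothesis HM : (1 <= M)%nat.
Let p := (M + 1 + M)%nat.

Lemma G_first k : (k < M + 1)%nat -> G p k = (1 - sin (2 * (0 + INR k) * (PI / INR p))) / 2.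
Proof. intros Hk. unfold G, q.
  rewrite Z.mod_small by lia. rewrite <- INR_IZR_INZ.
  destruct Rlt_dec as [h|h].
  - rewrite sin2_form. f_equal. f_equal. f_equal. ring.
  - exfalso. apply h. unfold p. rewrite !plus_INR. simpl.
    assert (INR k <= INR M) by (apply le_INR; lia). lra. Qed.

Lemma G_second j : (j < M)%nat -> G p (M + 1 + j) = (1 + sin (2 * (INR (M + 1) + INR j) * (PI / INR p))) / 2.
Proof. intros Hj. unfold G, q.
  rewrite Z.mod_small by lia. rewrite <- INR_IZR_INZ.
  destruct Rlt_dec as [h|h].
  - exfalso. revert h. unfold p. rewrite !plus_INR. simpl. pose proof (pos_INR j). lra.
  - rewrite cos2_form. f_equal. f_equal. f_equal. rewrite (plus_INR (M+1) j). ring. Qed.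

Lemma mean_bound : sumR p (G p) <= INR p * (1 / 2 - 1 / PI + 1 / (2 * INR p)).
Proof.
  assert (Hp : INR p = 2 * INR M + 1) by (unfold p; rewrite !plus_INR; simpl; ring).
  assert (HMr : 1 <= INR M) by (apply (le_INR 1); lia).
  set (x := PI / INR p).
  assert (Hpi : INR p * x = PI) by (unfold x; field; lra).
  pose proof PI_RGT_0 as Hpi0. pose proof PI_4.
  assert (Hx0 : 0 < x) by (unfold x; apply Rdiv_lt_0_compat; lra).
  assert (Hx2 : x <= 2) by (apply Rmult_le_reg_l with (INR p); lra).
  change (sumR p (G p)) with (sumR (M + 1 + M) (G p)). rewrite sumR_split.
  rewrite (sumR_ext (M+1) (G p) (fun k => /2 + (-/2) * sin (2 * (0 + INR k) * x))) by
    (intros; rewrite G_first; auto; unfold x; lra).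
  rewrite (sumR_ext M (fun k => G p (M + 1 + k)%nat) (fun j => /2 + /2 * sin (2 * (INR (M+1) + INR j) * x))) by
    (intros; rewrite G_second; auto; unfold x; lra).
  rewrite !sumR_plus, !sumR_scal, !sumR_const.
  set (S1 := sumR (M + 1) (fun k => sin (2 * (0 + INR k) * x))).
  set (S2 := sumR M (fun k => sin (2 * (INR (M + 1) + INR k) * x))).
  assert (E1 : 2 * sin x * S1 = 1 + cos x).
  { unfold S1. rewrite tele_sin. replace ((2 * 0 - 1) * x) with (- x) by ring.
    rewrite cos_neg. replace ((2 * (0 + INR (M + 1)) - 1) * x) with PI.
    rewrite cos_PI; ring. rewrite <- Hpi, Hp, plus_INR. simpl. ring. }
  assert (E2 : 2 * sin x * S2 = - 1 - cos x).
  { unfold S2. rewrite tele_sin.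
    replace ((2 * INR (M + 1) - 1) * x) with PI.
    replace ((2 * (INR (M + 1) + INR M) - 1) * x) with (- x + 2 * PI).
    rewrite cos_PI, cos_plus, cos_2PI, sin_2PI, cos_neg; ring.
    rewrite <- Hpi, Hp, plus_INR. simpl. ring.
    rewrite <- Hpi, Hp, plus_INR. simpl. ring. }
  assert (Hxpi : x < PI) by nra.
  assert (Hs : 0 < sin x) by (apply sin_gt_0; lra).
  assert (Hsx : sin x <= x) by (left; apply sin_lt_x; lra).
  assert (Hc : 1 - x ^ 2 / 2 <= cos x).
  { replace x with (2 * (x / 2)) at 2 by field. rewrite cos_2a_sin.
    assert (0 < sin (x / 2)) by (apply sin_gt_0; lra).
    assert (sin (x / 2) < x / 2) by (apply sin_lt_x; lra). nra. }
  assert (Hd : 2 * sin x * (S1 - S2) = 2 * (1 + cos x)) by lra.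
  assert (Hpos : 0 < S1 - S2) by nra.
  assert (Hk : 2 - x <= x * (S1 - S2)) by nra.
  rewrite plus_INR. simpl INR at 1 2.
  assert (1 / PI = 1 / (INR p * x)) by (rewrite Hpi; auto).
  rewrite H0. rewrite Hp. rewrite Hp in H0.
  apply Rmult_le_reg_l with (2 * x). lra.
  field_simplify; try lra.
Qed.
End Mean.

Lemma exp_pow x m : exp x ^ m = exp (INR m * x).
Proof. induction m. simpl; rewrite Rmult_0_l, exp_0; auto.
  simpl pow. rewrite IHm, S_INR, <- exp_plus. f_equal; ring. Qed.

Lemma odd_prime p : prime (Z.of_nat p) -> p <> 2%nat -> exists M, (1 <= M)%nat /\ p = (M + 1 + M)%nat.
Proof. intros Hp H2. pose proof (prime_ge_2 _ Hp).
  destruct (Nat.Even_or_Odd p) as [[k Hk]|[k Hk]].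
  - exfalso. assert ((2 | Z.of_nat p)%Z) by (exists (Z.of_nat k); lia).
    destruct (prime_divisors _ Hp _ H0) as [E|[E|[E|E]]]; lia.
  - exists k. split; lia. Qed.

Lemma exp_le_mono a b : a <= b -> exp a <= exp b.
Proof. intros [H|H]. left; apply exp_increasing; auto. subst; lra. Qed.

Theorem lemma4p3 :
  exists C : R, forall (p n : nat),
    prime (Z.of_nat p) -> p <> 2%nat -> (2 <= n)%nat ->
    unif_exp (n - 1) (fun x => q p (Z.of_nat (hweight x)))
      <= 1 / 2 - 1 / PI + 1 / (2 * INR p)
         + C * Rpower (INR p) (3 / 2) * exp (- INR n / (INR p ^ 2)).
Proof.
  exists 2. intros p n Hpr H2 Hn.
  destruct (odd_prime p Hpr H2) as [M [HM Hp]].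
  pose proof (mean_bound M HM) as Hmean. rewrite <- Hp in Hmean.
  assert (Hp3 : (3 <= p)%nat) by lia.
  assert (Hpr3 : 3 <= INR p) by (replace 3 with (INR 3) by (simpl; ring); apply le_INR; lia).
  set (m := (n - 1)%nat).
  set (c := sumR p (G p) / INR p).
  set (h := fun k => G p k - c).
  change (fun x => q p (Z.of_nat (hweight x))) with (fun x => G p (hweight x)).
  rewrite unif_Titer.
  rewrite (Titer_ext m (G p) (fun i => 1 * h i + c * 1)) by (intros; unfold h; ring).
  rewrite Titer_lin, Titer_const.
  assert (Hc : c <= 1 / 2 - 1 / PI + 1 / (2 * INR p)).
  { unfold c. apply Rmult_le_reg_l with (INR p). lra.
    replace (INR p * (sumR p (G p) / INR p)) with (sumR p (G p)) by (field; lra). auto. }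
  assert (Hc01 : 0 <= c <= 1).
  { unfold c. assert (0 <= sumR p (G p)) by (apply sumR_nonneg; intros; apply G_bounds).
    assert (sumR p (G p) <= sumR p (fun _ => 1)) by (apply sumR_le; intros; apply G_bounds).
    rewrite sumR_const in H0. split.
    apply Rmult_le_pos; [lra| left; apply Rinv_0_lt_compat; lra]. apply Rmult_le_reg_l with (INR p). lra.
    replace (INR p * (sumR p (G p) / INR p)) with (sumR p (G p)) by (field; lra). lra. }
  assert (Hper : periodic p h).
  { intro k. unfold h. rewrite (G_per p); auto. lia. }
  assert (Hmz : sumR p h = 0).
  { unfold h. rewrite (sumR_ext p _ (fun k => G p k + (-1) * c)) by (intros; ring).
    rewrite sumR_plus, sumR_scal, sumR_const. unfold c. field. lra. }
  assert (HE : EE p h <= INR p).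
  { unfold EE. rewrite <- (Rmult_1_r (INR p)), <- sumR_const. apply sumR_le. intros i _.
    unfold h. pose proof (G_bounds p i). nra. }
  pose proof (Titer_energy p ltac:(lia) m h Hper Hmz) as HT.
  set (rho := 1 - 3 / INR p ^ 2) in HT.
  assert (Hrho : 0 <= rho <= exp (- 3 / INR p ^ 2)).
  { unfold rho. split.
    - assert (3 / INR p ^ 2 <= 1). { apply Rmult_le_reg_l with (INR p ^2). nra. field_simplify; nra. } lra.
    - pose proof (exp_ineq1_le (- 3 / INR p ^ 2)). unfold Rdiv in *. lra. }
  assert (Hrm : rho ^ m <= exp (INR m * (- 3 / INR p ^ 2))).
  { rewrite <- exp_pow. apply pow_incr. auto. }
  set (y := Titer m h 0%nat).
  assert (Hy : y ^ 2 <= INR p * exp (INR m * (- 3 / INR p ^ 2))).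
  { assert (y ^ 2 <= EE p (Titer m h)).
    { unfold EE, y. apply (sumR_term0 p (fun k => Titer m h k ^ 2)). lia. intros; apply pow2_ge_0. }
    assert (0 <= EE p h) by (apply EE_nonneg).
    assert (0 <= rho ^ m) by (apply pow_le; lra).
    pose proof (exp_pos (INR m * (- 3 / INR p ^ 2))).
    nra. }
  set (B := 2 * Rpower (INR p) (3 / 2) * exp (- INR n / INR p ^ 2)).
  assert (HB0 : 0 <= B).
  { unfold B. assert (0 < Rpower (INR p) (3/2)) by (unfold Rpower; apply exp_pos).
    pose proof (exp_pos (- INR n / INR p ^ 2)). nra. }
  assert (HB2 : B ^ 2 = 4 * INR p ^ 3 * exp (- INR n / INR p ^ 2) ^ 2).
  { unfold B. replace (INR p ^ 3) with (Rpower (INR p) (3/2) * Rpower (INR p) (3/2)).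
    ring. rewrite <- Rpower_plus. replace (3/2 + 3/2) with (INR 3) by (simpl; field).
    apply Rpower_pow. lra. }
  assert (Hexp : exp (INR m * (- 3 / INR p ^ 2)) <= 3 * exp (- INR n / INR p ^ 2) ^ 2).
  { rewrite exp_pow. replace (INR 2 * (- INR n / INR p ^ 2)) with (2 * (- INR n / INR p ^ 2)) by (simpl; ring).
    apply Rle_trans with (exp (1 + 2 * (- INR n / INR p ^ 2))).
    - apply exp_le_mono. unfold m. rewrite minus_INR by lia. simpl INR.
      assert (2 <= INR n) by (replace 2 with (INR 2) by (simpl; ring); apply le_INR; lia).
      apply Rmult_le_reg_l with (INR p ^ 2). nra. field_simplify; try nra.
    - rewrite exp_plus. pose proof exp_le_3. pose proof (exp_pos (2 * (- INR n / INR p ^ 2))). nra. }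
  assert (Hpp : INR p <= INR p ^ 3) by nra.
  assert (y ^ 2 <= B ^ 2).
  { rewrite HB2. pose proof (exp_pos (- INR n / INR p ^ 2)).
    assert (0 <= exp (- INR n / INR p ^ 2) ^ 2) by (apply pow_le; lra).
    pose proof (exp_pos (INR m * (- 3 / INR p ^ 2))). nra. }
  assert (y <= B) by nra.
  fold B. lra.
Qed.
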